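(* Assume (A1)–(A3) below. The overidentifying restrictions hold, i.e. there is $\beta_0\in\mathbb R$ with $\mathbb E[(Y_i-\beta_0D_i)(Z_{\ell i}-p_\ell)]=0$ for all $\ell=1,\dots,L$, if and only if $\mathrm{Wald}_1=\mathrm{Wald}_2=\cdots=\mathrm{Wald}_L$. Equivalently, $\mathrm{Wald}_1=\cdots=\mathrm{Wald}_L$ holds if and only if there exists $\beta_0$ such that $\sum_{t\in\mathcal T}\alpha_t(\ell)(\mathrm{LATE}_t-\beta_0)=0$ for every $\ell$.
   Context: Observe i.i.d. $(Y_i,D_i,\mathbf Z_i)$, $D_i\in\{0,1\}$, $\mathbf Z_i=(Z_{1i},\dots,Z_{Li})'\in\{0,1\}^L$, $L\ge2$. Units have potential outcomes $Y_i(0),Y_i(1)$ and a compliance type $D_i(\cdot):\{0,1\}^L\to\{0,1\}$, $D_i=D_i(\mathbf Z_i)$, $Y_i=D_iY_i(1)+(1-D_i)Y_i(0)$; $\mathcal T$ is the set of types, $\theta_t=P(D_i(\cdot)=t)$, $\mathrm{LATE}_t=\mathbb E[Y_i(1)-Y_i(0)\mid D_i(\cdot)=t]$, and $t(z_\ell,z_{-\ell})$ is type $t$'s treatment at the instrument vector with $\ell$-th coordinate $z_\ell$ and others $z_{-\ell}$. $p_\ell=P(Z_{\ell i}=1)$, $\pi_\ell,\rho_\ell$ are the differences in $\mathbb E[D_i\mid Z_{\ell i}=z]$ and $\mathbb E[Y_i\mid Z_{\ell i}=z]$ between $z=1$ and $z=0$, $\mathrm{Wald}_\ell=\rho_\ell/\pi_\ell$,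 $\Sigma_Z=\mathrm{Var}(\mathbf Z_i)$. $q_\ell(z_{-\ell})=P(Z_{-\ell}=z_{-\ell}\mid Z_\ell=1)$, $q^0_\ell(z_{-\ell})=P(Z_{-\ell}=z_{-\ell}\mid Z_\ell=0)$, $\varphi_t(\ell)=\sum_{z_{-\ell}}[t(1,z_{-\ell})q_\ell(z_{-\ell})-t(0,z_{-\ell})q^0_\ell(z_{-\ell})]$, $\alpha_t(\ell)=\theta_t\varphi_t(\ell)/\pi_\ell$. Assumptions: (A1) $(Y_i(0),Y_i(1),D_i(\cdot))$ independent of $\mathbf Z_i$. (A2) $D_i(z)$ nondecreasing in each coordinate for every $i$. (A3) $p_\ell>0$, $\pi_\ell>0$ for all $\ell$; $\Sigma_Z$ positive definite. (The paper phrases the first part as: the Hansen $J$-test of overidentifying restrictions is a joint test of $H_0:\mathrm{Wald}_1=\cdots=\mathrm{Wald}_L$.) *)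

(* Defs.v *)
From HB Require Import structures.
From mathcomp Require Import all_boot all_order all_algebra.
From mathcomp Require Import all_classical all_reals all_analysis.
Set Implicit Arguments. Unset Strict Implicit. Unset Printing Implicit Defensive.
Import Order.TTheory GRing.Theory Num.Theory.
Local Open Scope classical_set_scope.
Local Open Scope ring_scope.

Definition ivec (L : nat) := {ffun 'I_L -> bool}.
Definition ctype (L : nat) := {ffun ivec L -> bool}.

Definition setc (L : nat) (z : ivec L) (l : 'I_L) (b : bool) : ivec L :=
  [ffun j => if j == l then b else z j].

Section Model.
Context {R : realType} {d : measure_display} {Omega : measurableType d}.
Variable P : probability Omega R.
Variable L : nat.
Variables (Y0 Y1 : Omega -> R) (Dt : Omega -> ctype L) (Z : Omega -> ivec L).

Definition Pr (A : set Omega) : R := fine (P A).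
Definition Ex (f : Omega -> R) : R := fine (\int[P]_w (f w)%:E).
Definition bR (b : bool) : R := (b : nat)%:R.
Definition ind (A : set Omega) (w : Omega) : R := bR (`[< A w >]).

Definition Dobs (w : Omega) : bool := Dt w (Z w).
Definition Yobs (w : Omega) : R := if Dobs w then Y1 w else Y0 w.

Definition condE (f : Omega -> R) (A : set Omega) : R :=
  Ex (fun w => f w * ind A w) / Pr A.

Definition Zev (l : 'I_L) (b : bool) : set Omega := [set w | Z w l = b].

Definition pZ (l : 'I_L) : R := Pr (Zev l true).
Definition piZ (l : 'I_L) : R :=
  condE (fun w => bR (Dobs w)) (Zev l true) - condE (fun w => bR (Dobs w)) (Zev l false).
Definition rhoZ (l : 'I_L) : R :=
  condE Yobs (Zev l true) - condE Yobs (Zev l false).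
Definition Wald (l : 'I_L) : R := rhoZ l / piZ l.

Definition SigmaZ : 'M[R]_L :=
  \matrix_(j, k) (Ex (fun w => bR (Z w j) * bR (Z w k))
                  - Ex (fun w => bR (Z w j)) * Ex (fun w => bR (Z w k))).

Definition theta (t : ctype L) : R := Pr [set w | Dt w = t].
Definition LATE (t : ctype L) : R :=
  condE (fun w => Y1 w - Y0 w) [set w | Dt w = t].

(* q_l(z_{-l}) (b = true) and q^0_l(z_{-l}) (b = false); z_{-l} is represented
   by any z : ivec L, only its coordinates j != l matter *)
Definition qZ (l : 'I_L) (b : bool) (z : ivec L) : R :=
  Pr [set w | Z w l = b /\ forall j, j != l -> Z w j = z j] / Pr (Zev l b).

(* sum over z_{-l} in {0,1}^{L-1}: each z_{-l} is represented exactly once by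
   the vector z with z l = false *)
Definition phiT (t : ctype L) (l : 'I_L) : R :=
  \sum_(z : ivec L | ~~ z l)
     (bR (t (setc z l true)) * qZ l true z - bR (t (setc z l false)) * qZ l false z).

Definition alphaT (t : ctype L) (l : 'I_L) : R := theta t * phiT t l / piZ l.

(* (A1): (Y(0), Y(1), D(.)) independent of Z; stated on the generating
   pi-system of rectangles (Borel B1 x Borel B2 x {t}) and the atoms {Z = z} *)
Definition A1_indep : Prop :=
  forall (B1 B2 : set R) (t : ctype L) (z : ivec L),
    measurable B1 -> measurable B2 ->
    Pr [set w | B1 (Y0 w) /\ B2 (Y1 w) /\ Dt w = t /\ Z w = z]
    = Pr [set w | B1 (Y0 w) /\ B2 (Y1 w) /\ Dt w = t] * Pr [set w | Z w = z].

Definition A2_monotone : Prop :=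
  forall w (z : ivec L) (l : 'I_L), (Dt w (setc z l false) ==> Dt w (setc z l true)).

Definition A3_relevance : Prop :=
  (forall l, 0 < pZ l /\ 0 < piZ l) /\
  (forall v : 'cV[R]_L, v != 0 -> 0 < (v^T *m SigmaZ *m v) ord0 ord0).

Definition model_regular : Prop :=
  P.-integrable setT (EFin \o Y0) /\ P.-integrable setT (EFin \o Y1) /\
  (forall t, measurable (Dt @^-1` [set t])) /\
  (forall z, measurable (Z @^-1` [set z])).

Definition overid : Prop :=
  exists beta0 : R, forall l : 'I_L,
    Ex (fun w => (Yobs w - beta0 * bR (Dobs w)) * (bR (Z w l) - pZ l)) = 0.

Definition wald_equal : Prop := forall l l' : 'I_L, Wald l = Wald l'.

Definition late_restriction : Prop :=
  exists beta0 : R, forall l : 'I_L,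
    \sum_(t : ctype L) alphaT t l * (LATE t - beta0) = 0.

End Model.

(* Main.v *)
Require Import Defs.
From HB Require Import structures.
From mathcomp Require Import all_boot all_order all_algebra.
From mathcomp Require Import all_classical all_reals all_analysis.
From mathcomp Require Import measurable_realfun.
From mathcomp Require Import ring lra.
Set Implicit Arguments. Unset Strict Implicit. Unset Printing Implicit Defensive.
Import Order.TTheory GRing.Theory Num.Theory.
Local Open Scope classical_set_scope.
Local Open Scope ring_scope.

Section Gen.
Context {R : realType} {d : measure_display} {Omega : measurableType d}.
Variable P : probability Omega R.

Definition Int (f : Omega -> R) := P.-integrable setT (EFin \o f).

Lemma indE (A : set Omega) : ind (R:=R) A = \1_A.
Proof.
apply/funext => w; rewrite /ind /bR indicE.
by congr (_%:R).
Qed.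

Lemma PrE (A : set Omega) : measurable A -> (Pr P A)%:E = P A.
Proof. move=> mA; by rewrite /Pr fineK // fin_num_measure. Qed.

Lemma Ex_fin f : Int f -> (Ex P f)%:E = (\int[P]_w (f w)%:E)%E.
Proof. by move=> h; rewrite /Ex fineK // integrable_fin_num. Qed.

Lemma Ex_add f g : Int f -> Int g -> Ex P (fun w => f w + g w) = Ex P f + Ex P g.
Proof.
move=> hf hg; apply: EFin_inj; rewrite EFinD !Ex_fin //.
  by rewrite -integralD.
rewrite /Int; apply: eq_integrable (integrableD _ hf hg) => //.
Qed.

Lemma Int_add f g : Int f -> Int g -> Int (fun w => f w + g w).
Proof. by move=> hf hg; apply: eq_integrable (integrableD _ hf hg). Qed.

Lemma Int_scale k f : Int f -> Int (fun w => k * f w).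
Proof. by move=> hf; apply: eq_integrable (integrableZl _ k hf). Qed.

Lemma Ex_scale k f : Int f -> Ex P (fun w => k * f w) = k * Ex P f.
Proof.
move=> hf; apply: EFin_inj; rewrite EFinM !Ex_fin //; last exact: Int_scale.
by rewrite -integralZl.
Qed.


Lemma Int_zero : Int (fun _ => 0).
Proof. exact: integrable0. Qed.

Lemma Int_ext f g : Int f -> (forall w, f w = g w) -> Int g.
Proof. by move=> hf /funext <-. Qed.

Lemma Int_sum (I : Type) (s : seq I) (F : I -> Omega -> R) :
  (forall i, Int (F i)) -> Int (fun w => \sum_(i <- s) F i w).
Proof.
move=> hF; elim: s => [|i s IH].
  by apply: Int_ext Int_zero _ => w; rewrite big_nil.
by apply: Int_ext (Int_add (hF i) IH) _ => w; rewrite big_cons.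
Qed.

Lemma Ex_zero : Ex P (fun _ => 0) = 0.
Proof. by rewrite /Ex integral0. Qed.

Lemma Ex_ext f g : (forall w, f w = g w) -> Ex P f = Ex P g.
Proof. by move=> h; congr (Ex P _); apply/funext. Qed.

Lemma Ex_sum (I : Type) (s : seq I) (F : I -> Omega -> R) :
  (forall i, Int (F i)) ->
  Ex P (fun w => \sum_(i <- s) F i w) = \sum_(i <- s) Ex P (F i).
Proof.
move=> hF; elim: s => [|i s IH].
  rewrite big_nil -[RHS]Ex_zero; apply: Ex_ext => w; by rewrite big_nil.
rewrite big_cons -IH -Ex_add //; last exact: Int_sum.
by apply: Ex_ext => w; rewrite big_cons.
Qed.

Lemma Int_ind A : measurable A -> Int (ind A).
Proof. by move=> mA; rewrite /Int indE; exact: integrable_indic. Qed.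

Lemma Ex_ind A : measurable A -> Ex P (ind A) = Pr P A.
Proof. by move=> mA; rewrite /Ex indE integral_indic // setIT. Qed.

Lemma Int_meas f : Int f -> measurable_fun setT f.
Proof. by move=> /measurable_int /measurable_realfun.measurable_EFinP. Qed.

Lemma Int_mulind Y A : Int Y -> measurable A -> Int (fun w => Y w * ind A w).
Proof.
move=> hY mA; have mY := Int_meas hY; apply: le_integrable hY => //.
  apply/measurable_realfun.measurable_EFinP; apply: measurable_realfun.measurable_funM; first exact: mY.
  rewrite indE; exact: measurable_realfun.measurable_indic.
move=> w _ /=; rewrite lee_fin normrM indE indicE.
by case: (w \in A); rewrite ?normr1 ?normr0 ?mulr1 ?mulr0.
Qed.


Lemma Ex_restr Y A : measurable A ->
  (\int[P]_w ((Y w * ind A w)%:E))%E = (\int[P]_(w in A) (Y w)%:E)%E.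
Proof.
move=> mA; rewrite [RHS]integral_mkcond; apply: eq_integral => w _.
rewrite /patch indE indicE; case: (w \in A) => /=; by rewrite ?mulr1 ?mulr0.
Qed.

Lemma Ex_null Y A : measurable A -> Int Y -> Pr P A = 0 ->
  Ex P (fun w => Y w * ind A w) = 0.
Proof.
move=> mA hY h0; rewrite /Ex Ex_restr // null_set_integral //.
  apply/measurable_realfun.measurable_EFinP; apply: measurable_funTS; exact: Int_meas hY.
have := PrE mA; rewrite h0 => /esym h; exact: h.
Qed.

Lemma restr_integral (A : set Omega) (mA : measurable A) (f : Omega -> \bar R) :
  measurable_fun setT f ->
  (\int[mrestr P mA]_x f x = \int[P]_(x in A) f x)%E.
Proof.
move=> mf.
transitivity (\int[mrestr P mA]_(x in A `|` ~` A) f x)%E; first by rewrite setUv.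
rewrite integral_setU //; last 3 first.
- exact: measurableC.
- by rewrite setUv.
- by rewrite disj_set2E setICr.
rewrite (null_set_integral (N := ~` A)) //; last 3 first.
- exact: measurableC.
- exact: measurable_funTS.
- by rewrite /= /mrestr setICl measure0.
rewrite adde0; apply: eq_measure_integral => B mB BA.
by rewrite /= /mrestr setIidl.
Qed.

End Gen.

Lemma integral_mscale_gen (R : realType) d' (T : measurableType d') (k : {nonneg R})
  (m : {measure set T -> \bar R}) (h : T -> \bar R) :
  m.-integrable setT h ->
  (\int[mscale k m]_x h x = (k%:num)%:E * \int[m]_x h x)%E.
Proof.
move=> hi.
have hp := integrable_funepos measurableT hi.
have hn := integrable_funeneg measurableT hi.
transitivity ((\int[mscale k m]_x h^\+ x) - (\int[mscale k m]_x h^\- x))%E.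
  exact: integralE.
rewrite (ge0_integral_mscale _ _ _ (measurable_int _ hp)) //.
rewrite (ge0_integral_mscale _ _ _ (measurable_int _ hn)) //.
rewrite -muleBr //; first by rewrite -integralE.
apply: fin_num_adde_defl; rewrite fin_numN.
exact: integrable_fin_num.
Qed.


Section Indep.
Context {R : realType} {d : measure_display} {Omega : measurableType d}.
Variable P : probability Omega R.

Lemma push_int (Y : Omega -> R) (mY : measurable_fun setT Y) (X : set Omega)
  (mX : measurable X) : Int P Y ->
  (\int[P]_w ((Y w * ind X w)%:E) =
   \int[measure_function_pushforward__canonical__measure_function_Measure
          (mrestr P mX) mY]_y y%:E)%E
  /\ (measure_function_pushforward__canonical__measure_function_Measure
          (mrestr P mX) mY).-integrable setT EFin.
Proof.
move=> hY.
have hint : (mrestr P mX).-integrable (Y @^-1` setT) (EFin \o Y).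
  rewrite preimage_setT; apply/integrableP; split.
    exact/measurable_EFinP.
  rewrite restr_integral //; last first.
    apply: measurableT_comp => //; exact/measurable_EFinP.
  by case/integrableP: (integrableS measurableT mX (@subsetT _ X) hY).
split; last first.
  apply: (integrable_pushforward mY) => //; exact: EFin_measurable.
rewrite Ex_restr // -restr_integral //; last exact/measurable_EFinP.
by rewrite (integral_pushforward mY).
Qed.


Lemma indep_Ex (Y : Omega -> R) (A C : set Omega) :
  measurable A -> measurable C -> Int P Y ->
  (forall B : set R, measurable B ->
     P (Y @^-1` B `&` (A `&` C)) = ((Pr P C)%:E * P (Y @^-1` B `&` A))%E) ->
  Ex P (fun w => Y w * ind (A `&` C) w) = Pr P C * Ex P (fun w => Y w * ind A w).
Proof.
move=> mA mC hY hind.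
have mY := Int_meas hY.
have mAC := measurableI _ _ mA mC.
have c0 : 0 <= Pr P C by apply: fine_ge0; exact: measure_ge0.
have [eA iA] := push_int mY mA hY.
have [eAC _] := push_int mY mAC hY.
apply: EFin_inj; rewrite EFinM !Ex_fin; [|exact: Int_mulind|exact: Int_mulind].
rewrite eA eAC.
rewrite (eq_measure_integral (mscale (NngNum c0)
  (measure_function_pushforward__canonical__measure_function_Measure (mrestr P mA) mY))); last first.
  move=> B mB _; rewrite /= /mscale /pushforward /mrestr /=. exact: hind.
by rewrite integral_mscale_gen.
Qed.

End Indep.

Section Model.
Context {R : realType} {d : measure_display} {Omega : measurableType d}.
Variable P : probability Omega R.
Variable L : nat.
Variables (Y0 Y1 : Omega -> R) (Dt : Omega -> ctype L) (Z : Omega -> ivec L).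
Hypothesis hreg : model_regular P Y0 Y1 Dt Z.
Hypothesis hA1 : A1_indep P Y0 Y1 Dt Z.

Definition Et (t : ctype L) : set Omega := [set w | Dt w = t].
Definition Ez (z : ivec L) : set Omega := [set w | Z w = z].
Definition piz z := Pr P (Ez z).
Definition th t := Pr P (Et t).
Definition A0 t := Ex P (fun w => Y0 w * ind (Et t) w).
Definition A1 t := Ex P (fun w => Y1 w * ind (Et t) w).

Lemma mEt t : measurable (Et t).
Proof. by case: hreg => _ [_ [h _]]; exact: h. Qed.
Lemma mEz z : measurable (Ez z).
Proof. by case: hreg => _ [_ [_ h]]; exact: h. Qed.
Lemma IY0 : Int P Y0. Proof. by case: hreg. Qed.
Lemma IY1 : Int P Y1. Proof. by case: hreg => _ []. Qed.

Lemma mZpre (X : set (ivec L)) : measurable (Z @^-1` X).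
Proof.
have -> : Z @^-1` X = \bigcup_(z in X) Ez z.
  apply/seteqP; split => w /=.
    by move=> Xw; exists (Z w).
  by case=> z Xz /= ->.
apply: fin_bigcup_measurable; first exact: finite_finset.
by move=> z _; exact: mEz.
Qed.

Lemma decomp (G : ctype L -> ivec L -> Omega -> R) w :
  G (Dt w) (Z w) w = \sum_t \sum_z ind (Et t `&` Ez z) w * G t z w.
Proof.
rewrite (bigD1 (Dt w)) //= [X in _ + X]big1 ?addr0; last first.
  move=> t tn; apply: big1 => z _.
  rewrite indE indicE; case: (boolP (w \in _)) => h; last by rewrite mul0r.
  rewrite inE in h; case: h => /= e _.
  by move: tn; rewrite e eqxx.
rewrite (bigD1 (Z w)) //= [X in _ + X]big1 ?addr0; last first.
  move=> z zn.
  rewrite indE indicE; case: (boolP (w \in _)) => h; last by rewrite mul0r.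
  rewrite inE in h; case: h => _ /= e.
  by move: zn; rewrite e eqxx.
rewrite indE indicE; case: (boolP (w \in _)) => h; first by rewrite mul1r.
by case/negP: h; rewrite inE.
Qed.

Lemma mpre Y (hY : Int P Y) (B : set R) : measurable B -> measurable (Y @^-1` B).
Proof. by move=> mB; rewrite -[_ @^-1` _]setTI; exact: (Int_meas hY measurableT mB). Qed.

Lemma indep0 t z : Ex P (fun w => Y0 w * ind (Et t `&` Ez z) w) = piz z * A0 t.
Proof.
apply: indep_Ex (mEt t) (mEz z) IY0 _ => B mB.
have := hA1 t z mB (@measurableT _ R).
have -> : [set w | B (Y0 w) /\ setT (Y1 w) /\ Dt w = t /\ Z w = z] =
  Y0 @^-1` B `&` (Et t `&` Ez z).
  by apply/seteqP; split => w /=; tauto.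
have -> : [set w | B (Y0 w) /\ setT (Y1 w) /\ Dt w = t] = Y0 @^-1` B `&` Et t.
  by apply/seteqP; split => w /=; tauto.
have m1 : measurable (Y0 @^-1` B `&` (Et t `&` Ez z)).
  by apply: measurableI; [exact: mpre IY0 _ mB|exact: measurableI (mEt t) (mEz z)].
have m2 : measurable (Y0 @^-1` B `&` Et t).
  by apply: measurableI; [exact: mpre IY0 _ mB|exact: mEt].
move=> h; rewrite -(PrE P m1) -(PrE P m2) h EFinM muleC.
by rewrite /piz /Ez.
Qed.

Lemma indep1 t z : Ex P (fun w => Y1 w * ind (Et t `&` Ez z) w) = piz z * A1 t.
Proof.
apply: indep_Ex (mEt t) (mEz z) IY1 _ => B mB.
have := hA1 t z (@measurableT _ R) mB.
have -> : [set w | setT (Y0 w) /\ B (Y1 w) /\ Dt w = t /\ Z w = z] =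
  Y1 @^-1` B `&` (Et t `&` Ez z).
  by apply/seteqP; split => w /=; tauto.
have -> : [set w | setT (Y0 w) /\ B (Y1 w) /\ Dt w = t] = Y1 @^-1` B `&` Et t.
  by apply/seteqP; split => w /=; tauto.
have m1 : measurable (Y1 @^-1` B `&` (Et t `&` Ez z)).
  by apply: measurableI; [exact: mpre IY1 _ mB|exact: measurableI (mEt t) (mEz z)].
have m2 : measurable (Y1 @^-1` B `&` Et t).
  by apply: measurableI; [exact: mpre IY1 _ mB|exact: mEt].
move=> h; rewrite -(PrE P m1) -(PrE P m2) h EFinM muleC.
by rewrite /piz /Ez.
Qed.

Lemma indepP t z : Pr P (Et t `&` Ez z) = th t * piz z.
Proof.
have := hA1 t z (@measurableT _ R) (@measurableT _ R).
have -> : [set w | setT (Y0 w) /\ setT (Y1 w) /\ Dt w = t /\ Z w = z] = Et t `&` Ez z.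
  by apply/seteqP; split => w /=; tauto.
have -> : [set w | setT (Y0 w) /\ setT (Y1 w) /\ Dt w = t] = Et t.
  by apply/seteqP; split => w /=; tauto.
by [].
Qed.

Lemma KL (c0 c1 c2 : ctype L -> ivec L -> R) :
  Ex P (fun w => c0 (Dt w) (Z w) * Y0 w + c1 (Dt w) (Z w) * Y1 w + c2 (Dt w) (Z w)) =
  \sum_t \sum_z (c0 t z * A0 t + c1 t z * A1 t + c2 t z * th t) * piz z.
Proof.
pose E t z := Et t `&` Ez z.
have mE t z : measurable (E t z) by exact: measurableI (mEt t) (mEz z).
pose F t z w := c0 t z * (Y0 w * ind (E t z) w) + c1 t z * (Y1 w * ind (E t z) w)
   + c2 t z * ind (E t z) w.
have IF t z : Int P (F t z).
  apply: Int_add; first apply: Int_add.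
  - by apply: Int_scale; apply: Int_mulind (mE t z); exact: IY0.
  - by apply: Int_scale; apply: Int_mulind (mE t z); exact: IY1.
  - by apply: Int_scale; apply: Int_ind.
rewrite (@Ex_ext _ _ _ P _ (fun w => \sum_t \sum_z F t z w)); last first.
  move=> w; have := decomp (fun t z w => c0 t z * Y0 w + c1 t z * Y1 w + c2 t z) w.
  rewrite /= => ->; apply: eq_bigr => t _; apply: eq_bigr => z _.
  by rewrite /F; ring.
rewrite Ex_sum; last by move=> t; apply: Int_sum.
apply: eq_bigr => t _; rewrite Ex_sum //; apply: eq_bigr => z _.
rewrite /F !Ex_add; last 4 first.
- by apply: Int_scale; apply: Int_mulind (mE t z); exact: IY0.
- by apply: Int_scale; apply: Int_mulind (mE t z); exact: IY1.
- by apply: Int_add; apply: Int_scale; apply: Int_mulind (mE t z); [exact: IY0|exact: IY1].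
- by apply: Int_scale; apply: Int_ind.
rewrite !Ex_scale; last 3 first.
- exact: Int_ind.
- by apply: Int_mulind (mE t z); exact: IY1.
- by apply: Int_mulind (mE t z); exact: IY0.
rewrite Ex_ind // indep0 indep1 indepP; ring.
Qed.

Lemma Ex_one : Ex P (fun _ => 1) = 1.
Proof.
rewrite (@Ex_ext _ _ _ P _ (ind setT)); last first.
  by move=> w; rewrite indE indicE in_setT.
by rewrite Ex_ind // /Pr probability_setT.
Qed.

Lemma sum_fib (I : finType) (g : Omega -> I) :
  (forall i, measurable [set w | g w = i]) ->
  \sum_i Pr P [set w | g w = i] = 1.
Proof.
move=> mg; rewrite -Ex_one.
rewrite (@Ex_ext _ _ _ P _ (fun w => \sum_i ind [set w | g w = i] w)); last first.
  move=> w; rewrite (bigD1 (g w)) //= big1 ?addr0.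
    by rewrite indE indicE mem_set.
  move=> i ni; rewrite indE indicE memNset //= => e.
  by move: ni; rewrite e eqxx.
rewrite Ex_sum; last by move=> i; exact: Int_ind.
by apply: eq_bigr => i _; rewrite Ex_ind.
Qed.

Lemma sum_th : \sum_t th t = 1.
Proof. exact: sum_fib mEt. Qed.

Lemma sum_piz : \sum_z piz z = 1.
Proof. exact: sum_fib mEz. Qed.

Definition Hz (z : ivec L) := \sum_(t : ctype L) bR (t z) * th t.
Definition Mz (z : ivec L) := \sum_(t : ctype L) bR (t z) * (A1 t - A0 t).
Definition a0 := \sum_t A0 t.
Definition sb (l : 'I_L) b := \sum_(z : ivec L | z l == b) piz z.

Lemma bRN b : @bR R (~~ b) = 1 - bR b.
Proof. by case: b; rewrite /bR /= ?subrr ?subr0. Qed.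

Lemma bRM b : @bR R b * bR b = bR b.
Proof. by case: b; rewrite /bR /= ?mulr1 ?mulr0. Qed.

Lemma indZ l b w : ind (R:=R) (Zev Z l b) w = bR (Z w l == b).
Proof. by rewrite /ind; congr bR; apply: asbool_equiv_eqP (eqP) _. Qed.

Lemma exch (X : ctype L -> ivec L -> R) :
  \sum_t \sum_z X t z * piz z = \sum_z piz z * \sum_t X t z.
Proof.
rewrite exchange_big; apply: eq_bigr => z _.
by rewrite mulr_sumr; apply: eq_bigr => t _; rewrite mulrC.
Qed.

Lemma sum_cond l b (Q : ivec L -> R) :
  \sum_(z : ivec L) piz z * (bR (z l == b) * Q z) = \sum_(z : ivec L | z l == b) piz z * Q z.
Proof.
rewrite [RHS]big_mkcond; apply: eq_bigr => z _.
by case: (z l == b); rewrite /bR /= ?mul1r ?mul0r ?mulr0.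
Qed.

Lemma PrZ l b : Pr P (Zev Z l b) = sb l b.
Proof.
rewrite -Ex_ind; last exact: mZpre [set z | z l = b].
rewrite (@Ex_ext _ _ _ P _ (fun w => (fun _ _ => 0) (Dt w) (Z w) * Y0 w
   + (fun _ _ => 0) (Dt w) (Z w) * Y1 w + (fun (t : ctype L) (z : ivec L) => bR (z l == b)) (Dt w) (Z w))); last first.
  by move=> w; rewrite indZ /= !mul0r !add0r.
rewrite (KL (fun _ _ => 0) (fun _ _ => 0) (fun (t : ctype L) (z : ivec L) => bR (z l == b))) exch /sb.
transitivity (\sum_(z : ivec L | z l == b) piz z * 1); last by apply: eq_bigr => z _; rewrite mulr1.
rewrite -sum_cond; apply: eq_bigr => z _.
congr (_ * _); rewrite -sum_th mulr_sumr; apply: eq_bigr => t _.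
by rewrite !mul0r !add0r.
Qed.

Lemma KLgen (k : ivec L -> R) (al be : R) :
  Ex P (fun w => (al * Yobs Y0 Y1 Dt Z w + be * bR (Dobs Dt Z w)) * k (Z w)) =
  \sum_(z : ivec L) piz z * ((al * (a0 + Mz z) + be * Hz z) * k z).
Proof.
rewrite (@Ex_ext _ _ _ P _ (fun w =>
   (fun (t : ctype L) (z : ivec L) => al * bR (~~ t z) * k z) (Dt w) (Z w) * Y0 w
 + (fun (t : ctype L) (z : ivec L) => al * bR (t z) * k z) (Dt w) (Z w) * Y1 w
 + (fun (t : ctype L) (z : ivec L) => be * bR (t z) * k z) (Dt w) (Z w))); last first.
  move=> w /=; rewrite /Yobs /Dobs; case: (Dt w (Z w)); rewrite /bR /=; ring.
rewrite (KL (fun (t : ctype L) (z : ivec L) => al * bR (~~ t z) * k z)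
            (fun (t : ctype L) (z : ivec L) => al * bR (t z) * k z)
            (fun (t : ctype L) (z : ivec L) => be * bR (t z) * k z)) exch.
apply: eq_bigr => z _; congr (_ * _).
rewrite /a0 /Mz /Hz.
rewrite -big_split /= !mulr_sumr -big_split /= mulr_suml.
apply: eq_bigr => t _; rewrite bRN; ring.
Qed.

Lemma setc_l (z : ivec L) l b : setc z l b l = b.
Proof. by rewrite /setc ffunE eqxx. Qed.

Lemma reidx1 l (F : ivec L -> R) :
  \sum_(z : ivec L | ~~ z l) F (setc z l true) = \sum_(z : ivec L | z l == true) F z.
Proof.
pose flip (z : ivec L) := setc z l (~~ z l).
have flipK : involutive flip.
  move=> z; apply/ffunP => j; rewrite /flip /setc !ffunE.
  by case: (j =P l) => [->|//]; rewrite eqxx negbK.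
rewrite [RHS](reindex flip) /=; last by exists flip => z _; exact: flipK.
apply: eq_big => z.
  by rewrite /flip setc_l eqb_id.
by move=> zl; rewrite /flip (negbTE zl).
Qed.

Lemma reidx0 l (F : ivec L -> R) :
  \sum_(z : ivec L | ~~ z l) F (setc z l false) = \sum_(z : ivec L | z l == false) F z.
Proof.
apply: eq_big => z; first by rewrite eqbF_neg.
move=> zl; congr F; apply/ffunP => j; rewrite /setc ffunE.
by case: (j =P l) => [->|//]; rewrite (negbTE zl).
Qed.

Lemma qZE l b z : qZ P Z l b z = piz (setc z l b) / sb l b.
Proof.
rewrite /qZ -PrZ /piz; congr (Pr P _ / _).
apply/seteqP; split => w /=.
  case=> h1 h2; apply/ffunP => j; rewrite /setc ffunE.
  by case: (j =P l) => [->//|/eqP jl]; exact: h2.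
move=> ->; split; first exact: setc_l.
by move=> j jl; rewrite /setc ffunE (negbTE jl).
Qed.

Lemma ExY l b : Ex P (fun w => Yobs Y0 Y1 Dt Z w * ind (Zev Z l b) w) =
  \sum_(z : ivec L | z l == b) piz z * (a0 + Mz z).
Proof.
rewrite (@Ex_ext _ _ _ P _ (fun w => (1 * Yobs Y0 Y1 Dt Z w + 0 * bR (Dobs Dt Z w))
   * (fun z : ivec L => bR (z l == b)) (Z w))); last first.
  by move=> w; rewrite indZ mul1r mul0r addr0.
rewrite (KLgen (fun z : ivec L => bR (z l == b))) -sum_cond; apply: eq_bigr => z _; congr (_ * _).
by rewrite mul1r mul0r addr0 mulrC.
Qed.

Lemma ExD l b : Ex P (fun w => bR (Dobs Dt Z w) * ind (Zev Z l b) w) =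
  \sum_(z : ivec L | z l == b) piz z * Hz z.
Proof.
rewrite (@Ex_ext _ _ _ P _ (fun w => (0 * Yobs Y0 Y1 Dt Z w + 1 * bR (Dobs Dt Z w))
   * (fun z : ivec L => bR (z l == b)) (Z w))); last first.
  by move=> w; rewrite indZ mul1r mul0r add0r.
rewrite (KLgen (fun z : ivec L => bR (z l == b))) -sum_cond; apply: eq_bigr => z _; congr (_ * _).
by rewrite mul1r mul0r add0r mulrC.
Qed.

Lemma ExO l be : Ex P (fun w => (Yobs Y0 Y1 Dt Z w - be * bR (Dobs Dt Z w)) * (bR (Z w l) - pZ P Z l)) =
  \sum_(z : ivec L) piz z * ((a0 + Mz z - be * Hz z) * (bR (z l) - sb l true)).
Proof.
rewrite (@Ex_ext _ _ _ P _ (fun w => (1 * Yobs Y0 Y1 Dt Z w + (- be) * bR (Dobs Dt Z w))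
   * (fun z : ivec L => bR (z l) - sb l true) (Z w))); last first.
  by move=> w; rewrite /pZ PrZ mul1r mulNr.
rewrite (KLgen (fun z : ivec L => bR (z l) - sb l true)); apply: eq_bigr => z _; congr (_ * (_ * _)).
by rewrite mul1r mulNr.
Qed.

Definition Gc (c : ctype L -> R) (z : ivec L) := \sum_(t : ctype L) bR (t z) * c t.

Lemma phisum l (c : ctype L -> R) :
  \sum_t c t * phiT P Z t l =
  (\sum_(z : ivec L | z l == true) piz z * Gc c z) / sb l true
  - (\sum_(z : ivec L | z l == false) piz z * Gc c z) / sb l false.
Proof.
rewrite /phiT.
under eq_bigr do rewrite mulr_sumr.
rewrite exchange_big /=.
rewrite -(reidx1 l (fun z => piz z * Gc c z)) -(reidx0 l (fun z => piz z * Gc c z)).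
rewrite !mulr_suml -sumrB; apply: eq_bigr => z _.
rewrite !qZE /Gc !mulr_sumr !mulr_suml -sumrB; apply: eq_bigr => t _.
ring.
Qed.

Lemma thLATE t : th t * LATE P Y0 Y1 Dt t = A1 t - A0 t.
Proof.
have mt := mEt t.
rewrite /LATE /condE.
have -> : Ex P (fun w => (Y1 w - Y0 w) * ind [set w | Dt w = t] w) = A1 t - A0 t.
  rewrite (@Ex_ext _ _ _ P _ (fun w => Y1 w * ind (Et t) w + (-1) * (Y0 w * ind (Et t) w))); last first.
    by move=> w; rewrite /Et; ring.
  rewrite Ex_add; [|exact: Int_mulind IY1 mt|by apply: Int_scale; exact: Int_mulind IY0 mt].
  by rewrite Ex_scale; [rewrite /A1 /A0; ring|exact: Int_mulind IY0 mt].
rewrite -/(th t).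
have [th0|th0] := eqVneq (th t) 0.
  by rewrite th0 mul0r /A1 /A0 !Ex_null ?subrr //; [exact: IY0|exact: IY1].
by rewrite mulrCA divff // mulr1.
Qed.

Lemma sb_sum l : sb l true + sb l false = 1.
Proof.
rewrite /sb -sum_piz [RHS](bigID (fun z : ivec L => z l)) /=.
by congr (_ + _); apply: eq_bigl => z; rewrite ?eqb_id ?eqbF_neg.
Qed.

Lemma ExZl l : Ex P (fun w => bR (Z w l)) = sb l true.
Proof.
rewrite -PrZ -Ex_ind; last exact: mZpre [set z | z l = true].
by apply: Ex_ext => w; rewrite indZ eqb_id.
Qed.

Lemma ExZl2 l : Ex P (fun w => bR (Z w l) * bR (Z w l)) = sb l true.
Proof. by rewrite -ExZl; apply: Ex_ext => w; rewrite bRM. Qed.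

Lemma sb_pos (h3 : A3_relevance P Dt Z) l : 0 < sb l true /\ 0 < sb l false.
Proof.
case: h3 => h1 h2.
have p1 : 0 < sb l true by rewrite -PrZ; case: (h1 l).
split => //.
pose v : 'cV[R]_L := delta_mx l 0.
have vn : v != 0.
  apply/eqP => h; have := congr1 (fun M : 'cV[R]_L => M l 0) h.
  by rewrite /v !mxE !eqxx /= => /eqP; rewrite oner_eq0.
have := h2 v vn.
rewrite /v trmx_delta -rowE -colE !mxE ExZl2 ExZl.
have := sb_sum l; move: (sb l true) (sb l false) p1 => a b ha hab hq.
nra.
Qed.

Definition EY l b := \sum_(z : ivec L | z l == b) piz z * (a0 + Mz z).
Definition ED l b := \sum_(z : ivec L | z l == b) piz z * Hz z.

Lemma rhoE l : rhoZ P Y0 Y1 Dt Z l = EY l true / sb l true - EY l false / sb l false.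
Proof. by rewrite /rhoZ /condE !ExY !PrZ. Qed.

Lemma piE l : piZ P Dt Z l = ED l true / sb l true - ED l false / sb l false.
Proof. by rewrite /piZ /condE !ExD !PrZ. Qed.

Lemma split_l l (Q : ivec L -> R) :
  \sum_(z : ivec L) Q z = \sum_(z : ivec L | z l == true) Q z + \sum_(z : ivec L | z l == false) Q z.
Proof.
rewrite (bigID (fun z : ivec L => z l)) /=.
by congr (_ + _); apply: eq_bigl => z; rewrite ?eqb_id ?eqbF_neg.
Qed.

Lemma key_over (h3 : A3_relevance P Dt Z) l be :
  Ex P (fun w => (Yobs Y0 Y1 Dt Z w - be * bR (Dobs Dt Z w)) * (bR (Z w l) - pZ P Z l)) =
  sb l false * sb l true * (rhoZ P Y0 Y1 Dt Z l - be * piZ P Dt Z l).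
Proof.
have [p1 p0] := sb_pos h3 l.
have hs := sb_sum l.
rewrite ExO rhoE piE (split_l l).
have e1 : \sum_(z : ivec L | z l == true) piz z * ((a0 + Mz z - be * Hz z) * (bR (z l) - sb l true))
  = (1 - sb l true) * (EY l true - be * ED l true).
  rewrite /EY /ED mulr_sumr -sumrB mulr_sumr; apply: eq_bigr => z /eqP ->.
  rewrite /bR /=; ring.
have e0 : \sum_(z : ivec L | z l == false) piz z * ((a0 + Mz z - be * Hz z) * (bR (z l) - sb l true))
  = (- sb l true) * (EY l false - be * ED l false).
  rewrite /EY /ED mulr_sumr -sumrB mulr_sumr; apply: eq_bigr => z /eqP ->.
  rewrite /bR /=; ring.
rewrite e1 e0.
have -> : 1 - sb l true = sb l false by rewrite -hs; ring.
field; apply/andP; split; apply: lt0r_neq0 => //.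
Qed.

Lemma EYE l b : EY l b = a0 * sb l b + \sum_(z : ivec L | z l == b) piz z * Mz z.
Proof.
rewrite /EY /sb mulr_sumr -big_split; apply: eq_bigr => z _ /=; ring.
Qed.

Lemma key_late (h3 : A3_relevance P Dt Z) l be :
  \sum_t alphaT P Dt Z t l * (LATE P Y0 Y1 Dt t - be) =
  (rhoZ P Y0 Y1 Dt Z l - be * piZ P Dt Z l) / piZ P Dt Z l.
Proof.
have [p1 p0] := sb_pos h3 l.
have pp : 0 < piZ P Dt Z l by case: h3 => h _; case: (h l).
have pn := lt0r_neq0 pp.
transitivity ((\sum_t (A1 t - A0 t) * phiT P Z t l - be * \sum_t th t * phiT P Z t l)
   / piZ P Dt Z l).
  rewrite mulr_sumr -sumrB mulr_suml; apply: eq_bigr => t _.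
  rewrite /alphaT -thLATE /theta -/(th t); field => //.
have GM : Gc (fun t => A1 t - A0 t) = Mz by [].
have GH : Gc th = Hz by [].
rewrite (phisum l (fun t => A1 t - A0 t)) (phisum l th) GM GH -/(ED l true) -/(ED l false).
rewrite rhoE piE !EYE.
congr (_ / _); field; apply/andP; split; apply: lt0r_neq0 => //.
Qed.

End Model.

Lemma wald_iff (R : realType) (L : nat) (hL : (0 < L)%N) (rho pi : 'I_L -> R) :
  (forall l, 0 < pi l) ->
  (exists b : R, forall l, rho l - b * pi l = 0) <-> (forall l l', rho l / pi l = rho l' / pi l').
Proof.
move=> hp; split.
  case=> b hb l l'.
  have e l0 : rho l0 / pi l0 = b.
    have := hb l0; move/eqP; rewrite subr_eq0 => /eqP ->.
    by rewrite mulfK // lt0r_neq0.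
  by rewrite !e.
move=> hw; exists (rho (Ordinal hL) / pi (Ordinal hL)) => l.
rewrite -(hw l) mulfVK ?subrr // lt0r_neq0 //.
Qed.

Theorem proposition6 (R : realType) (d : measure_display) (Omega : measurableType d)
  (P : probability Omega R) (L : nat)
  (Y0 Y1 : Omega -> R) (Dt : Omega -> ctype L) (Z : Omega -> ivec L) :
  (2 <= L)%N ->
  model_regular P Y0 Y1 Dt Z ->
  A1_indep P Y0 Y1 Dt Z ->
  A2_monotone Dt ->
  A3_relevance P Dt Z ->
  (overid P Y0 Y1 Dt Z <-> wald_equal P Y0 Y1 Dt Z) /\
  (wald_equal P Y0 Y1 Dt Z <-> late_restriction P Y0 Y1 Dt Z).
Proof.
move=> hL hreg hA1 _ h3.
have hL0 : (0 < L)%N by apply: leq_trans hL.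
have hp l : 0 < piZ P Dt Z l by case: h3 => h _; case: (h l).
have W := wald_iff hL0 (rhoZ P Y0 Y1 Dt Z) hp.
rewrite /wald_equal /Wald.
split.
  rewrite -W /overid; split.
    case=> b hb; exists b => l; move: (hb l).
    rewrite (key_over hreg hA1 h3) => /eqP; rewrite !mulf_eq0 => /orP[/orP[]|/eqP //].
      by have [_ /lt0r_neq0 /negbTE ->] := sb_pos hreg hA1 h3 l.
    by have [/lt0r_neq0 /negbTE -> _] := sb_pos hreg hA1 h3 l.
  case=> b hb; exists b => l.
  by rewrite (key_over hreg hA1 h3) hb mulr0.
rewrite -W /late_restriction; split.
  case=> b hb; exists b => l.
  by rewrite (key_late hreg hA1 h3) hb mul0r.
case=> b hb; exists b => l; move: (hb l).
rewrite (key_late hreg hA1 h3) => /eqP; rewrite mulf_eq0 invr_eq0 => /orP[/eqP //|].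
by rewrite (negbTE (lt0r_neq0 (hp l))).
Qed.
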